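(* For all $n\ge0$, $$\prod_{i=1}^n(1+q^i)=F_{n+1}(q)+\sum_{k=0}^{n-2}q^kF_k(q)\prod_{i=k+3}^n(1+q^i),$$ where an empty product equals $1$.
   Context: $\Pi_n(13/2,123)$ is the set of layered matchings of $[n]$: set partitions whose blocks are consecutive intervals $[1,i_1]/\dots/[i_{k-1}+1,n]$, each of size $1$ or $2$. $\Pi_0(13/2,123)$ consists of the empty partition. For $\pi=B_1/\dots/B_k$ with $\min B_1<\dots<\min B_k$, $rb(\pi)$ is the number of pairs $(b,B_j)$ with $b\in B_i$, $j>i$, $\max B_j>b$. Define $F_n(q)=\sum_{\pi\in\Pi_n(13/2,123)}q^{rb(\pi)}$, so $F_0(q)=F_1(q)=1$. *)

(* Defs.v *)
From HB Require Import structures.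
From mathcomp Require Import all_boot all_order all_algebra.
Set Implicit Arguments. Unset Strict Implicit. Unset Printing Implicit Defensive.
Import Order.TTheory GRing.Theory Num.Theory.

(* Layered matchings of [n] = set partitions [1,i_1]/[i_1+1,i_2]/.../[i_{k-1}+1,n]
   into consecutive intervals of size 1 or 2.  Such a partition is determined by
   its sequence of block sizes, a composition of n with parts in {1,2}. *)

Fixpoint comps12 (n : nat) : seq (seq nat) :=
  match n with
  | 0 => [:: [::]]
  | S m1 =>
      match m1 with
      | 0 => [:: [:: 1]]
      | S m => map (cons 1) (comps12 m1) ++ map (cons 2) (comps12 m)
      end
  end.

Fixpoint blocks_from (s : nat) (c : seq nat) : seq (seq nat) :=
  match c with
  | [::] => [::]
  | m :: c' => iota s m :: blocks_from (s + m) c'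
  end.

(* Pi_n(13/2,123): layered matchings of [n] = {1..n}, each given as its list of
   blocks B_1, ..., B_k ordered by increasing minimum. *)
Definition layered_matchings (n : nat) : seq (seq (seq nat)) :=
  map (blocks_from 1) (comps12 n).

Fixpoint rb (bs : seq (seq nat)) : nat :=
  match bs with
  | [::] => 0
  | B :: bs' =>
      (\sum_(b <- B) count (fun C : seq nat => b < \max_(x <- C) x) bs') + rb bs'
  end.

Local Open Scope ring_scope.

Definition F (n : nat) : {poly int} :=
  \sum_(pi <- layered_matchings n) 'X^(rb pi).

(* Main.v *)
Require Import Defs.
From HB Require Import structures.
From mathcomp Require Import all_boot all_order all_algebra.
Import GRing.Theory.

Fixpoint rr (c : seq nat) : nat :=
  match c with [::] => 0 | m :: c' => m * size c' + rr c' end.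

Definition valid (c : seq nat) := all (fun x => (x == 1) || (x == 2)) c.

Lemma max_iota_ge s m : 0 < m -> s <= \max_(x <- iota s m) x.
Proof.
move=> m0; apply: (@leq_bigmax_seq _ _ xpredT (fun x => x)) => //.
by rewrite mem_iota leqnn /= -{1}(addn0 s) ltn_add2l.
Qed.

Lemma count_blocks s c b : all (fun x => 0 < x) c -> b < s ->
  count (fun C : seq nat => b < \max_(x <- C) x) (blocks_from s c) = size c.
Proof.
elim: c s => [//|m c IH] s /= /andP[m0 hc] bs.
rewrite IH //; last by apply: leq_trans bs (leq_addr _ _).
by rewrite (leq_trans bs (@max_iota_ge s m m0)).
Qed.

Lemma rb_blocks s c : all (fun x => 0 < x) c -> rb (blocks_from s c) = rr c.
Proof.
elim: c s => [//|m c IH] s /= /andP[m0 hc].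
rewrite IH //; congr (_ + _).
rewrite big_seq_cond (eq_bigr (fun _ => size c)); last first.
  move=> b /andP[]; rewrite mem_iota => /andP[_ h] _.
  by apply: count_blocks.
by rewrite -big_seq_cond big_const_seq count_predT size_iota iter_addn_0 mulnC.
Qed.

Lemma mem_map_cons (a x : nat) c s :
  (x :: c \in map (cons a) s) = (x == a) && (c \in s).
Proof.
elim: s => [|d s IH] /=; first by rewrite andbF.
by rewrite !in_cons IH eqseq_cons andb_orr.
Qed.

Lemma nil_map_cons (a : nat) s : ([::] \in map (cons a) s) = false.
Proof. by elim: s. Qed.

Lemma comps12_SS m : comps12 m.+2 = map (cons 1) (comps12 m.+1) ++ map (cons 2) (comps12 m).
Proof. by []. Qed.

Lemma mem_comps12 n c : (c \in comps12 n) = valid c && (sumn c == n).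
Proof.
elim: n {-2}n (leqnn n) c => [|N IHN] n hn c.
  move: hn; rewrite leqn0 => /eqP ->.
  case: c => [//|x c] /=; rewrite in_cons in_nil orbF /= /valid /=.
  by case: x => [|[|[|]]] //=; rewrite andbF.
case: n hn => [|[|m]] hn.
- case: c => [//|x c] /=; rewrite in_cons in_nil orbF /= /valid /=.
  by case: x => [|[|[|]]] //=; rewrite andbF.
- case: c => [|x c] /=; rewrite in_cons in_nil orbF /valid //=.
  rewrite eqseq_cons.
  case: x => [|[|[|x]]] //=; rewrite ?andbF //.
  case: c => [|y c] //=; case: y => [|[|[|y]]] //=; by rewrite ?andbF.
- rewrite comps12_SS mem_cat.
  case: c => [|x c]; first by rewrite !nil_map_cons.
  have h1 : m < N := hn. have h2 : m <= N := ltnW h1.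
  rewrite !mem_map_cons !IHN //.
  rewrite /valid /=.
  case: x => [|[|[|x]]] //=; rewrite ?orbF ?andbF //=.
Qed.

Lemma uniq_comps12 n : uniq (comps12 n).
Proof.
elim: n {-2}n (leqnn n) => [|N IHN] n hn.
  by move: hn; rewrite leqn0 => /eqP ->.
case: n hn => [|[|m]] hn //.
have h1 : m < N := hn. have h2 : m <= N := ltnW h1.
rewrite comps12_SS cat_uniq !map_inj_uniq ?IHN //; try (by move=> x y []).
rewrite andbT /=; apply/hasPn => c /mapP[d _ ->].
by rewrite mem_map_cons.
Qed.

Lemma perm_rev_comps n : perm_eq (map rev (comps12 n)) (comps12 n).
Proof.
apply: uniq_perm; rewrite ?map_inj_uniq ?uniq_comps12 //; first exact: (can_inj revK).
move=> c; rewrite -{1}(revK c) (mem_map (can_inj revK)) !mem_comps12.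
by rewrite /valid all_rev sumn_rev.
Qed.

Lemma rr_rcons d x : rr (rcons d x) = rr d + sumn d.
Proof.
elim: d => [|y d IH] /=; first by rewrite muln0.
rewrite IH size_rcons mulnS.
move: (y * size d) (rr d) (sumn d) => a b e.
by rewrite -!addnA addnCA; congr (_ + _); rewrite addnCA.
Qed.

Local Open Scope ring_scope.

Lemma valid_pos c : valid c -> all (fun x => 0 < x)%N c.
Proof. by elim: c => //= x c IH /andP[hx /IH ->]; case/orP: hx => /eqP ->. Qed.

Lemma F_rev n : F n = \sum_(c <- comps12 n) 'X^(rr (rev c)).
Proof.
rewrite /F /layered_matchings big_map big_seq.
rewrite (eq_bigr (fun c => 'X^(rr c))); last first.
  by move=> c; rewrite mem_comps12 => /andP[/valid_pos h _]; rewrite rb_blocks.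
rewrite -big_seq -(perm_big _ (perm_rev_comps n)) big_map.
by [].
Qed.

Lemma F_SS m : F m.+2 = 'X^(m.+1) * F m.+1 + 'X^m * F m.
Proof.
rewrite !F_rev comps12_SS big_cat !big_map !mulr_sumr.
congr (_ + _); rewrite big_seq [RHS]big_seq; apply: eq_bigr => c;
  rewrite mem_comps12 => /andP[_ /eqP hc];
  by rewrite rev_cons rr_rcons sumn_rev hc -exprD addnC.
Qed.

Lemma F0 : F 0 = 1. Proof. by rewrite /F /layered_matchings /= big_cons big_nil addr0 expr0. Qed.
Lemma F1 : F 1 = 1. Proof. by rewrite /F /layered_matchings /= big_cons big_nil addr0 (@rb_blocks 1 [:: 1%N]) // expr0. Qed.

Lemma alg_id (R : comNzRingType) (a b s y : R) :
  (a + b + s) * (1 + y) = y * (a + b) + a + (s * (1 + y) + b).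
Proof.
rewrite mulrDl mulrDr mulr1 (mulrC y).
set t := (a + b) * y; set u := s * (1 + y).
rewrite [t + a]addrC -!addrA; congr (a + _).
by rewrite addrC -addrA.
Qed.

Theorem theorem4p8 (n : nat) :
  \prod_(1 <= i < n.+1) (1 + 'X^i : {poly int}) =
  F n.+1 + \sum_(0 <= k < (n - 1)%N)
             'X^k * F k * \prod_(k.+3 <= i < n.+1) (1 + 'X^i).
Proof.
elim: n => [|[|p] IH].
- by rewrite big_geq // big_geq // F1 addr0.
- rewrite big_nat1 big_geq // addr0 (F_SS 0) F1 F0 !mulr1 expr0 addrC.
  by [].
- rewrite big_nat_recr //= IH.
  have -> : (p.+2 - 1 = p.+1)%N by rewrite subn1.
  have -> : (p.+1 - 1 = p)%N by rewrite subn1.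
  rewrite [in RHS]big_nat_recr //= [\prod_(p.+3 <= i < p.+3) _]big_geq // mulr1.
  rewrite [in RHS](eq_big_nat _ _ (F2 := fun k => 'X^k * F k * \prod_(k.+3 <= i < p.+2) (1 + 'X^i) * (1 + 'X^(p.+2)) : {poly int})); last first.
    by move=> k /andP[_ hk]; rewrite big_nat_recr ?mulrA.
  rewrite -mulr_suml.
  set S := \sum_(_ <= _ < _) _.
  rewrite (F_SS p.+1) (F_SS p).
  exact: alg_id.
Qed.
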